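(* Let $n\ge 1$, $v>0$, $p\in(0,1)$, $z>0$, and let $R_1,\dots,R_n>0$. Consider the system of equations in unknowns $a_0,b_0$: $$\frac{1-p}{p}b_0=\sum_{i=1}^n\frac{1+\frac{b_0}{a_0R_i}}{v-\frac{1}{a_0}-\frac{1}{b_0}},\qquad \frac{1}{zp}b_0-a_0=\sum_{i=1}^n\frac{1+\frac{a_0R_i}{b_0}}{v-\frac{1}{a_0}-\frac{1}{b_0}}.$$ Then this system has a unique positive solution ($a_0>0$, $b_0>0$). Moreover, with $r_1=\sum_{i=1}^n 1/R_i$, $r_2=\sum_{i=1}^n R_i$, $$D=n^2p^2z^2-2n^2pz^2+2n^2pz+n^2z^2-2n^2z+n^2-2np^2r_1z^2+2npr_1z^2+2npr_1z+p^2r_1^2z^2-4pr_1r_2z+4r_1r_2z,$$ and $$c=\frac{npz-nz+n-pr_1z+\sqrt{D}}{2z\,(np+(1-p)r_2)},$$ the positive solution is given by $c=a_0/b_0$, $$b_0=\frac{1}{v}\left(\frac{p}{1-p}\left(n+\frac{r_1}{c}\right)+1+\frac{1}{c}\right),\qquad a_0=c\,b_0.$$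
   Context: These are the Hamling equations for log odds ratios in the case where all reported variances $V_i$ equal $v$: $R_i$ are reported odds ratios, $p$ is the ratio of unexposed controls to total controls, $z$ is the ratio of total controls to total cases, and $a_0,b_0$ are the reference-group pseudo-cases and pseudo-non-cases. (Pseudo-counts at the other exposures are then $A_i=(1+a_0R_i/b_0)/(V_i-1/a_0-1/b_0)$ and $B_i=(1+b_0/(a_0R_i))/(V_i-1/a_0-1/b_0)$.) *)

(* Defs.v *)
(* the statement is algebraic, stated over any real closed field R
   (which includes the real numbers). *)
From mathcomp Require Import all_boot all_order all_algebra.
Set Implicit Arguments. Unset Strict Implicit. Unset Printing Implicit Defensive.
Import Order.TTheory GRing.Theory Num.Theory.
Local Open Scope ring_scope.

Definition hden (R : rcfType) (v a0 b0 : R) : R := v - 1 / a0 - 1 / b0.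

Definition hamling_eq1 (R : rcfType) (n : nat) (Rs : 'I_n -> R) (v p a0 b0 : R) : Prop :=
  (1 - p) / p * b0 = \sum_(i < n) (1 + b0 / (a0 * Rs i)) / hden v a0 b0.

Definition hamling_eq2 (R : rcfType) (n : nat) (Rs : 'I_n -> R) (v p z a0 b0 : R) : Prop :=
  1 / (z * p) * b0 - a0 = \sum_(i < n) (1 + a0 * Rs i / b0) / hden v a0 b0.

(* a positive solution; the denominator is required to be nonzero so that the
   equations make sense. *)
Definition hamling_pos_sol (R : rcfType) (n : nat) (Rs : 'I_n -> R) (v p z a0 b0 : R) : Prop :=
  [/\ 0 < a0, 0 < b0, hden v a0 b0 != 0,
      hamling_eq1 Rs v p a0 b0 & hamling_eq2 Rs v p z a0 b0].

Definition hr1 (R : rcfType) (n : nat) (Rs : 'I_n -> R) : R := \sum_(i < n) 1 / Rs i.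
Definition hr2 (R : rcfType) (n : nat) (Rs : 'I_n -> R) : R := \sum_(i < n) Rs i.

Definition hD (R : rcfType) (n : nat) (Rs : 'I_n -> R) (p z : R) : R :=
  let N := n%:R in let r1 := hr1 Rs in let r2 := hr2 Rs in
  N^+2 * p^+2 * z^+2 - 2 * N^+2 * p * z^+2 + 2 * N^+2 * p * z + N^+2 * z^+2
  - 2 * N^+2 * z + N^+2 - 2 * N * p^+2 * r1 * z^+2 + 2 * N * p * r1 * z^+2
  + 2 * N * p * r1 * z + p^+2 * r1^+2 * z^+2 - 4 * p * r1 * r2 * z + 4 * r1 * r2 * z.

Definition hc (R : rcfType) (n : nat) (Rs : 'I_n -> R) (p z : R) : R :=
  let N := n%:R in let r1 := hr1 Rs in let r2 := hr2 Rs in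
  (N * p * z - N * z + N - p * r1 * z + Num.sqrt (hD Rs p z))
    / (2 * z * (N * p + (1 - p) * r2)).

Definition hb0 (R : rcfType) (n : nat) (Rs : 'I_n -> R) (v p z : R) : R :=
  let c := hc Rs p z in
  1 / v * (p / (1 - p) * (n%:R + hr1 Rs / c) + 1 + 1 / c).

Definition ha0 (R : rcfType) (n : nat) (Rs : 'I_n -> R) (v p z : R) : R :=
  hc Rs p z * hb0 Rs v p z.

(* Main.v *)
Require Import Defs.
From mathcomp Require Import all_boot all_order all_algebra.
From mathcomp Require Import ring lra.
Import Order.TTheory GRing.Theory Num.Theory.
Local Open Scope ring_scope.

Lemma sum_pos (R : rcfType) (n : nat) (F : 'I_n -> R) :
  (0 < n)%N -> (forall i, 0 < F i) -> 0 < \sum_(i < n) F i.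
Proof.
case: n F => [//|n] F _ H.
rewrite big_ord_recl; apply: ltr_wpDr; last exact: H.
by apply: sumr_ge0 => i _; apply: ltW.
Qed.

Lemma sum1 (R : rcfType) (n : nat) (Rs : 'I_n -> R) (a b d : R) :
  \sum_(i < n) (1 + b / (a * Rs i)) / d = (n%:R + b / a * hr1 Rs) / d.
Proof.
rewrite -mulr_suml big_split /= sumr_const card_ord /hr1 mulr_sumr.
congr ((_ + _) * _); apply: eq_bigr => i _.
by rewrite invfM mul1r mulrA.
Qed.

Lemma sum2 (R : rcfType) (n : nat) (Rs : 'I_n -> R) (a b d : R) :
  \sum_(i < n) (1 + a * Rs i / b) / d = (n%:R + a / b * hr2 Rs) / d.
Proof.
rewrite -mulr_suml big_split /= sumr_const card_ord /hr2 mulr_sumr.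
congr ((_ + _) * _); apply: eq_bigr => i _.
by rewrite mulrAC.
Qed.

Set Implicit Arguments. Unset Strict Implicit.

Definition QA (R : rcfType) (N r2 p z : R) := z * (p * N + (1 - p) * r2).
Definition QB (R : rcfType) (N r1 p z : R) := (1 - p) * N * z + p * r1 * z - N.

Ltac fld := field; rewrite ?andbT; by repeat (apply/andP; split).

Lemma U (R : rcfType) (N r1 r2 v p z c b : R) :
  0 < p -> p < 1 -> 0 < z -> 0 < c -> 0 < b ->
  (1-p)/p * b * (v - 1/(c * b) - 1/b) = N + b/(c * b) * r1 ->
  (1/(z * p) * b - c * b) * (v - 1/(c * b) - 1/b) = N + c * b/b * r2 ->
  QA N r2 p z * c^+2 + QB N r1 p z * c - r1 = 0.
Proof.
move=> p0 p1 z0 c0 b0 E1 E2.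
have H : (N + c * b/b * r2) * ((1-p)/p * b) = (1/(z * p) * b - c * b) * (N + b/(c * b) * r1).
  by rewrite -E1 -E2; ring.
have pn : p != 0 by rewrite gt_eqF.
have zn : z != 0 by rewrite gt_eqF.
have cn : c != 0 by rewrite gt_eqF.
have bn : b != 0 by rewrite gt_eqF.
have -> : QA N r2 p z * c^+2 + QB N r1 p z * c - r1 =
   z * p * c / b * ((N + c * b/b * r2) * ((1-p)/p * b) - (1/(z * p) * b - c * b) * (N + b/(c * b) * r1)).
  rewrite /QA /QB; fld.
by rewrite H subrr mulr0.
Qed.

Lemma Ub (R : rcfType) (N r1 v p c b : R) :
  0 < v -> 0 < p -> p < 1 -> 0 < c -> 0 < b ->
  (1-p)/p * b * (v - 1/(c * b) - 1/b) = N + b/(c * b) * r1 ->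
  b = 1/v * (p/(1-p) * (N + r1/c) + 1 + 1/c).
Proof.
move=> v0 p0 p1 c0 b0 E1.
have pn : p != 0 by rewrite gt_eqF.
have vn : v != 0 by rewrite gt_eqF.
have cn : c != 0 by rewrite gt_eqF.
have bn : b != 0 by rewrite gt_eqF.
have qn : 1 - p != 0 by rewrite gt_eqF // subr_gt0.
apply/eqP; rewrite -subr_eq0; apply/eqP.
have -> : b - 1/v * (p/(1-p) * (N + r1/c) + 1 + 1/c) =
  p/((1-p) * v) * ((1-p)/p * b * (v - 1/(c * b) - 1/b) - (N + b/(c * b) * r1)).
  fld.
by rewrite E1 subrr mulr0.
Qed.

Lemma Uc (R : rcfType) (N r1 r2 p z c : R) :
  0 < QA N r2 p z -> 0 < r1 -> 0 < c ->
  QA N r2 p z * c^+2 + QB N r1 p z * c - r1 = 0 ->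
  c = (Num.sqrt (QB N r1 p z ^+2 + 4 * QA N r2 p z * r1) - QB N r1 p z) / (2 * QA N r2 p z).
Proof.
set A := QA N r2 p z; set B := QB N r1 p z => A0 r0 c0 Q.
set s := Num.sqrt _.
have s0 : 0 <= s := sqrtr_ge0 _.
have ss : s ^+ 2 = B ^+ 2 + 4 * A * r1 by rewrite sqr_sqrtr //; nra.
have sB : 0 < s + B by nra.
have e : (2 * A * c + B - s) * (2 * A * c + B + s) = 0.
  have -> : (2 * A * c + B - s) * (2 * A * c + B + s) = 4 * A * (A * c^+2 + B * c - r1) + (B^+2 + 4 * A * r1 - s^+2) by ring.
  by rewrite Q ss; ring.
have : 2 * A * c + B - s = 0.
  move/eqP: e; rewrite mulf_eq0 => /orP[/eqP //|/eqP h]; nra.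
move=> h; have An : A != 0 by rewrite gt_eqF.
apply/eqP; rewrite -subr_eq0; apply/eqP.
have -> : c - (s - B) / (2 * A) = (2 * A * c + B - s) / (2 * A) by fld.
by rewrite h mul0r.
Qed.

Lemma Ec (R : rcfType) (N r1 r2 p z : R) :
  0 < QA N r2 p z -> 0 < r1 ->
  let c := (Num.sqrt (QB N r1 p z ^+2 + 4 * QA N r2 p z * r1) - QB N r1 p z) / (2 * QA N r2 p z) in
  0 < c /\ QA N r2 p z * c^+2 + QB N r1 p z * c - r1 = 0.
Proof.
set A := QA N r2 p z; set B := QB N r1 p z => A0 r0.
set s := Num.sqrt _ => cc.
have s0 : 0 <= s := sqrtr_ge0 _.
have ss : s ^+ 2 = B ^+ 2 + 4 * A * r1 by rewrite sqr_sqrtr //; nra.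
have sB : 0 < s - B by nra.
have An : A != 0 by rewrite gt_eqF.
split; first by rewrite /cc divr_gt0 // mulr_gt0.
have -> : A * cc ^+ 2 + B * cc - r1 = (s^+2 - (B^+2 + 4 * A * r1)) / (4 * A) by rewrite /cc; fld.
by rewrite ss subrr mul0r.
Qed.

Lemma Eb (R : rcfType) (N r1 r2 v p z c b : R) :
  0 <= N -> 0 < r1 -> 0 < v -> 0 < p -> p < 1 -> 0 < z -> 0 < c ->
  QA N r2 p z * c^+2 + QB N r1 p z * c - r1 = 0 ->
  b = 1/v * (p/(1-p) * (N + r1/c) + 1 + 1/c) ->
  [/\ 0 < b, 0 < v - 1/(c * b) - 1/b,
   (1-p)/p * b = (N + b/(c * b) * r1) / (v - 1/(c * b) - 1/b) &
   1/(z * p) * b - c * b = (N + c * b/b * r2) / (v - 1/(c * b) - 1/b)].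
Proof.
move=> N0 r0 v0 p0 p1 z0 c0 Q hb.
have pn : p != 0 by rewrite gt_eqF.
have vn : v != 0 by rewrite gt_eqF.
have zn : z != 0 by rewrite gt_eqF.
have cn : c != 0 by rewrite gt_eqF.
have q0 : 0 < 1 - p by rewrite subr_gt0.
have qn : 1 - p != 0 by rewrite gt_eqF.
have b0 : 0 < b.
  rewrite hb mulr_gt0 ?divr_gt0 ?ltr01 //.
  apply: ltr_wpDr; first by rewrite divr_ge0 ?ler01 ?ltW.
  apply: ltr_wpDl; last exact: ltr01.
  apply: mulr_ge0; first by apply: divr_ge0; apply: ltW.
  by apply: addr_ge0 => //; apply: divr_ge0; apply: ltW.
have bn : b != 0 by rewrite gt_eqF.
have Ncr : 0 < N * c + r1 by rewrite ltr_wpDl // mulr_ge0 // ltW.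
have Ncn : N * c + r1 != 0 by rewrite gt_eqF.
have vb : v * b = p/(1-p) * (N + r1/c) + 1 + 1/c by rewrite hb; fld.
have dE : v - 1/(c * b) - 1/b = p * (N * c + r1) / ((1-p) * b * c).
  have -> : v - 1/(c * b) - 1/b = (v * b - 1/c - 1)/b by fld.
  rewrite vb; fld.
rewrite dE; split => //.
- by rewrite divr_gt0 ?mulr_gt0.
- fld.
apply/eqP; rewrite -subr_eq0; apply/eqP.
have -> : 1 / (z * p) * b - c * b - (N + c * b / b * r2) / (p * (N * c + r1) / ((1 - p) * b * c))
   = - b / (z * p * (N * c + r1)) * (QA N r2 p z * c^+2 + QB N r1 p z * c - r1).
  rewrite /QA /QB; fld.
by rewrite Q mulr0.
Qed.

Theorem theorem3 (R : rcfType) (n : nat) (Rs : 'I_n -> R) (v p z : R) :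
  (0 < n)%N -> 0 < v -> 0 < p -> p < 1 -> 0 < z -> (forall i, 0 < Rs i) ->
  (exists! ab : R * R, hamling_pos_sol Rs v p z ab.1 ab.2) /\
  (forall a0 b0 : R, hamling_pos_sol Rs v p z a0 b0 ->
     [/\ hc Rs p z = a0 / b0, b0 = hb0 Rs v p z & a0 = ha0 Rs v p z]).
Proof.
move=> n0 v0 p0 p1 z0 Rpos.
have r1p : 0 < hr1 Rs by apply: sum_pos => // i; rewrite divr_gt0 ?ltr01.
have r2p : 0 < hr2 Rs by apply: sum_pos.
have N0 : 0 < n%:R :> R by rewrite ltr0n.
have q0 : 0 < 1 - p by rewrite subr_gt0.
have A0 : 0 < QA n%:R (hr2 Rs) p z.
  by rewrite /QA mulr_gt0 // ltr_wpDr ?mulr_ge0 ?ltW // mulr_gt0.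
have hDE : hD Rs p z = QB n%:R (hr1 Rs) p z ^+ 2 + 4 * QA n%:R (hr2 Rs) p z * hr1 Rs.
  by rewrite /hD /QA /QB /=; ring.
have hcE : hc Rs p z = (Num.sqrt (QB n%:R (hr1 Rs) p z ^+ 2 + 4 * QA n%:R (hr2 Rs) p z * hr1 Rs)
                         - QB n%:R (hr1 Rs) p z) / (2 * QA n%:R (hr2 Rs) p z).
  rewrite /hc /= hDE; congr (_ / _); rewrite /QA /QB; ring.
have key : forall a0 b0, hamling_pos_sol Rs v p z a0 b0 ->
    hc Rs p z = a0 / b0 /\ b0 = hb0 Rs v p z.
  move=> a b [a0 b0 dn E1 E2].
  rewrite /hamling_eq1 sum1 in E1; rewrite /hamling_eq2 sum2 in E2.
  have bn : b != 0 by rewrite gt_eqF.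
  have ha : a = (a / b) * b by rewrite divfK.
  have c0 : 0 < a / b by rewrite divr_gt0.
  move: E1 E2 dn; rewrite /hden; move: (a / b) c0 ha => c c0 -> E1 E2 dn.
  have E1' : (1-p)/p * b * (v - 1/(c * b) - 1/b) = n%:R + b/(c * b) * hr1 Rs.
    by rewrite E1 divfK.
  have E2' : (1/(z * p) * b - c * b) * (v - 1/(c * b) - 1/b) = n%:R + c * b/b * hr2 Rs.
    by rewrite E2 divfK // mulfK.
  have Q := U p0 p1 z0 c0 b0 E1' E2'.
  have hcc : hc Rs p z = c by rewrite hcE -(Uc A0 r1p c0 Q).
  have cn : c != 0 by rewrite gt_eqF.
  split; first exact: hcc.
  by rewrite /hb0 hcc; apply: (Ub v0 p0 p1 c0 b0 E1').
have [c0 Qc] := Ec A0 r1p.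
rewrite -hcE in c0 Qc.
have [b0 d0 E1 E2] := Eb (ltW N0) r1p v0 p0 p1 z0 c0 Qc (erefl (hb0 Rs v p z)).
have sol : hamling_pos_sol Rs v p z (ha0 Rs v p z) (hb0 Rs v p z).
  split.
  - by rewrite /ha0 mulr_gt0.
  - by [].
  - by rewrite /hden /ha0 gt_eqF.
  - by rewrite /hamling_eq1 sum1 /hden /ha0.
  - by rewrite /hamling_eq2 sum2 /hden /ha0.
have all : forall a0 b0 : R, hamling_pos_sol Rs v p z a0 b0 ->
     [/\ hc Rs p z = a0 / b0, b0 = hb0 Rs v p z & a0 = ha0 Rs v p z].
  move=> a b H; have [h1 h2] := key a b H; split => //.
  have bn : b != 0 by case: H => _ b0' _ _ _; rewrite gt_eqF.
  by rewrite /ha0 h1 -h2 divfK.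
split => //.
exists (ha0 Rs v p z, hb0 Rs v p z); split => //.
by move=> [a b] /= /all [_ -> ->].
Qed.
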